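(* Let $n\geq 4$ and let $\tau: T_n\to \mathrm{GL}_{n+1}(\mathbb{C})$ be a homogeneous $3$-local representation of the twin group $T_n$. Then $\tau$ is reducible.
   Context: The twin group $T_n$ ($n\geq 2$) is the group with generators $s_1,\dots,s_{n-1}$ and defining relations $s_i^2=1$ for $1\leq i\leq n-1$ and $s_is_j=s_js_i$ for $|i-j|\geq 2$. A representation $\tau:T_n\to\mathrm{GL}_{n+1}(\mathbb{C})$ is called homogeneous $3$-local if there is a single matrix $M\in\mathrm{GL}_3(\mathbb{C})$ such that $\tau(s_i)=\mathrm{diag}(I_{i-1},M,I_{n-i-1})$ (block-diagonal, with $I_r$ the $r\times r$ identity) for all $1\leq i\leq n-1$. A representation on $\mathbb{C}^{m}$ is reducible if there is a subspace $0\neq U\neq\mathbb{C}^m$ invariant under all images of the group. *)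

(* Defs.v *)
From mathcomp Require Import all_boot all_algebra.
From mathcomp Require Import reals complex.
Set Implicit Arguments. Unset Strict Implicit. Unset Printing Implicit Defensive.
Import GRing.Theory Num.Theory.
Local Open Scope ring_scope.

(* tau_loc n M i = diag(I_{i-1}, M, I_{n-i-1}) as an (n+1)x(n+1) matrix
   (indices 0..n; the block M occupies rows/columns i-1, i, i+1). *)
Definition tau_loc (F : nzRingType) (n : nat) (M : 'M[F]_3) (i : nat)
  : 'M[F]_n.+1 :=
  \matrix_(j < n.+1, k < n.+1)
    if ((i.-1 <= j <= i.+1) && (i.-1 <= k <= i.+1))%N
    then M (inord (j - i.-1)) (inord (k - i.-1))
    else (j == k)%:R.

(* Generators s_1,...,s_{n-1} of T_n are indexed by i with 1 <= i <= n-1. *)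
Definition is_gen (n i : nat) : bool := (0 < i < n)%N.

Definition twin_rep_rel (F : nzRingType) (n : nat) (M : 'M[F]_3) : Prop :=
  (forall i, is_gen n i -> tau_loc n M i *m tau_loc n M i = 1%:M) /\
  (forall i j, is_gen n i -> is_gen n j -> (i + 2 <= j)%N ->
     tau_loc n M i *m tau_loc n M j = tau_loc n M j *m tau_loc n M i).

(* Image under tau of the group element s_{w_1} ... s_{w_k}
   (every element of T_n is such a word, since s_i^{-1} = s_i). *)
Definition tau_word (F : nzRingType) (n : nat) (M : 'M[F]_3) (w : seq nat)
  : 'M[F]_n.+1 :=
  \prod_(i <- w) tau_loc n M i.

(* The column space of U (a subspace of F^m, vectors as columns) is invariant
   under A. *)
Definition col_invariant (F : fieldType) (m : nat) (A U : 'M[F]_m) : bool :=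
  (((A *m U)^T) <= U^T)%MS.

Definition twin_reducible (F : fieldType) (n : nat) (M : 'M[F]_3) : Prop :=
  exists U : 'M[F]_n.+1,
    (0 < \rank U < n.+1)%N /\
    forall w : seq nat, all (is_gen n) w -> col_invariant (tau_word n M w) U.

(* Main.v *)
Require Import Defs.
From mathcomp Require Import all_boot all_algebra.
From mathcomp Require Import reals complex.
From mathcomp Require Import zify.
Import GRing.Theory Num.Theory.
Local Open Scope ring_scope.
Set Implicit Arguments. Unset Strict Implicit.

Lemma inv_diag (F : fieldType) m (A : 'M[F]_m) (S : pred 'I_m) :
  (forall j k, S k -> ~~ S j -> A j k = 0) ->
  col_invariant A (diag_mx (\row_j (S j)%:R)).
Proof.
move=> H; rewrite /col_invariant.
set d := \row_j _.
have -> : A *m diag_mx d = diag_mx d *m (A *m diag_mx d).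
  apply/matrixP => j k; rewrite mul_diag_mx mul_mx_diag !mxE.
  case Sk: (S k); case Sj: (S j); rewrite ?mulr1 ?mulr0 ?mul1r ?mul0r //.
  by rewrite H ?Sj ?mul0r.
by rewrite trmx_mul submxMl.
Qed.

Lemma inv_mul (F : fieldType) m (A B U : 'M[F]_m) :
  col_invariant A U -> col_invariant B U -> col_invariant (A *m B) U.
Proof.
rewrite /col_invariant => HA HB.
rewrite -mulmxA trmx_mul; apply: submx_trans HA.
rewrite trmx_mul [X in (_ <= X)%MS]trmx_mul; apply: submxMr; by rewrite -trmx_mul. 
Qed.

Lemma inv_word (F : fieldType) n (M : 'M[F]_3) U :
  (forall i, is_gen n i -> col_invariant (tau_loc n M i) U) ->
  forall w, all (is_gen n) w -> col_invariant (tau_word n M w) U.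
Proof.
move=> H; elim=> [|i w IH] /=.
  by rewrite /tau_word big_nil /col_invariant mul1mx submx_refl.
case/andP=> gi gw; rewrite /tau_word big_cons.
exact: inv_mul (H _ gi) (IH gw).
Qed.

Lemma inv_e0 (F : fieldType) n (M : 'M[F]_3) :
  M (inord 1) (inord 0) = 0 -> M (inord 2) (inord 0) = 0 ->
  forall i, is_gen n i ->
  col_invariant (tau_loc n M i) (diag_mx (\row_j ((j == ord0 :> 'I_n.+1))%:R)).
Proof.
move=> h1 h2 i gi; apply: inv_diag => j k /eqP -> nj; rewrite mxE.
case: i gi => [|[|i]] //= gi.
  case: j nj => [[|[|[|j]]] hj] //= _.
by rewrite andbF (negbTE nj).
Qed.

Lemma inv_h (F : fieldType) n (M : 'M[F]_3) :
  M (inord 0) (inord 1) = 0 -> M (inord 0) (inord 2) = 0 ->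
  forall i, is_gen n i ->
  col_invariant (tau_loc n M i) (diag_mx (\row_j ((j != ord0 :> 'I_n.+1))%:R)).
Proof.
move=> h1 h2 i gi; apply: inv_diag => j k nk /negPn/eqP ->; rewrite mxE.
case: i gi => [|[|i]] //= gi.
  case: k nk => [[|[|[|k]]] hk] //= _.
by rewrite eq_sym (negbTE nk).
Qed.

Lemma inv_en (F : fieldType) n (M : 'M[F]_3) :
  M (inord 0) (inord 2) = 0 -> M (inord 1) (inord 2) = 0 ->
  forall i, is_gen n i ->
  col_invariant (tau_loc n M i) (diag_mx (\row_j ((j == ord_max :> 'I_n.+1))%:R)).
Proof.
move=> h1 h2 i gi; apply: inv_diag => j k /eqP -> nj; rewrite mxE /=.
case/andP: gi => i0 iln.
case: (leqP n i.+1) => hn; last by rewrite !andbF (negbTE nj).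
case: ifP => [/andP[/andP[h3 h4] _]|_]; last by rewrite (negbTE nj).
have jn : (j : nat) != n.
  by move: nj; apply: contra => /eqP h; apply/eqP; apply: val_inj.
have -> : (n - i.-1 = 2)%N by lia.
have [->|->] : (j - i.-1 = 0 \/ j - i.-1 = 1)%N by lia.
  by rewrite h1.
by rewrite h2.
Qed.

Lemma diag_delta (F : fieldType) n (i : 'I_n.+1) :
  diag_mx (\row_j ((j == i))%:R) = delta_mx i i :> 'M[F]_n.+1.
Proof.
apply/matrixP => r s; rewrite !mxE.
case: (r =P i) => [->|_] /=; last by rewrite mul0rn.
by case: (s =P i) => [->|/eqP ns] /=; rewrite ?eqxx // eq_sym (negbTE ns).
Qed.

Lemma rank_hyp (F : fieldType) n :
  (0 < \rank (diag_mx (\row_j ((j != ord0 :> 'I_n.+1))%:R) : 'M[F]_n.+1) < n.+1)%N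
  \/ n = 0%N.
Proof.
set U := diag_mx _.
have eU : (1%:M : 'M[F]_n.+1) = U + delta_mx ord0 ord0.
  apply/matrixP => r s; rewrite !mxE.
  case: (r =P ord0) => [->|/eqP nr] /=.
    by case: (s =P ord0) => [->|/eqP ns] /=; rewrite ?mulr0n ?addr0 ?add0r // eq_sym (negbTE ns).
  by rewrite addr0.
have h1 : (n <= \rank U)%N.
  have := mxrank_add U (delta_mx ord0 ord0 : 'M[F]_n.+1).
  by rewrite -eU mxrank1 mxrank_delta addn1 ltnS.
have h2 : (\rank U < n.+1)%N.
  rewrite ltn_neqAle rank_leq_row andbT.
  apply/negP => /eqP hr.
  have uU : U \in unitmx by rewrite -row_free_unit /row_free hr.
  have z : U *m (delta_mx ord0 ord0 : 'M[F]_n.+1) = 0.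
    apply/matrixP => r s; rewrite mul_diag_mx !mxE.
    by case: (r == ord0) => /=; rewrite ?mul0r ?mulr0.
  have := mulKmx uU (delta_mx ord0 ord0 : 'M[F]_n.+1).
  rewrite z mulmx0 => /matrixP /(_ ord0 ord0); rewrite !mxE !eqxx /=.
  by move/esym/eqP; rewrite oner_eq0.
case: n U h1 h2 {eU} => [|n] U h1 h2; [by right | left].
by rewrite h2 andbT (leq_trans _ h1).
Qed.
Lemma entryE (F : nzRingType) m (A B : 'M[F]_m) i j : A = B -> A i j = B i j.
Proof. by move->. Qed.

Ltac entry E m r s :=
  have := entryE (Ordinal (isT : (r < m.+4.+1)%N)) (Ordinal (isT : (s < m.+4.+1)%N)) E;
  rewrite !mxE !big_ord_recl /= !mxE /bump /=;
  rewrite !big1 /=; [| by move=> i _; rewrite !mxE /bump /= ?mul0r ?mulr0 .. ]; rewrite /bump /= ?(addn0,add0n,addnS,addSn,subSS,subn0,subnn) ?mul0r ?mulr0 ?mul1r ?mulr1 ?add0r ?addr0.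

Lemma conds (F : fieldType) m (M : 'M[F]_3) :
  tau_loc m.+4 M 1 *m tau_loc m.+4 M 3 = tau_loc m.+4 M 3 *m tau_loc m.+4 M 1 ->
  [/\ M (inord 2) (inord 0) = 0, M (inord 0) (inord 2) = 0 &
     M (inord 0) (inord 1) = 0 \/ M (inord 1) (inord 2) = 0].
Proof.
move=> E; split.
- entry E m 4%N 0%N.
  by move/esym/eqP; rewrite mulf_eq0 orbb => /eqP.
- entry E m 0%N 4%N.
  by move/eqP; rewrite mulf_eq0 orbb => /eqP.
- entry E m 1%N 3%N.
  by move/eqP; rewrite mulf_eq0 => /orP[] /eqP; auto.
Qed.
Unset Implicit Arguments.

Theorem theorem3p2 (R : realType) (n : nat) (M : 'M[R[i]]_3) :
  (4 <= n)%N ->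
  M \in unitmx ->
  twin_rep_rel n M ->
  twin_reducible n M.
Proof.
move=> n4 _ [_ Hc].
have [m em] : exists m, n = m.+4 by exists (n - 4)%N; lia.
subst n.
have E := Hc 1%N 3%N isT isT isT.
have [_ c bf] := conds E.
have [f0|fn0] := eqVneq (M (inord 1) (inord 2)) 0.
  exists (diag_mx (\row_j ((j == ord_max :> 'I_m.+4.+1))%:R)); split.
    by rewrite diag_delta mxrank_delta.
  by apply: inv_word; apply: inv_en.
have b0 : M (inord 0) (inord 1) = 0 by case: bf => // f0; rewrite f0 eqxx in fn0.
exists (diag_mx (\row_j ((j != ord0 :> 'I_m.+4.+1))%:R)); split.
  by case: (rank_hyp (R[i]) m.+4).
by apply: inv_word; apply: inv_h.
Qed.
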